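(* $\widetilde{\mathbb{R}}=\mathbb{R}^{\mathrm{alg}}$, i.e. $\widetilde{\mathbb{R}}$ equals the field of real numbers that are algebraic over $\mathbb{Q}$.
   Context: Let $K$ be a field. For $r\in K$, a finite set $A(r)$ with $\{r\}\subseteq A(r)\subseteq K$ is called adequate for $r$ if every mapping $f:A(r)\to K$ satisfying (1) if $1\in A(r)$ then $f(1)=1$; (2) if $a,b\in A(r)$ and $a+b\in A(r)$ then $f(a+b)=f(a)+f(b)$; (3) if $a,b\in A(r)$ and $a\cdot b\in A(r)$ then $f(a\cdot b)=f(a)\cdot f(b)$, also satisfies $f(r)=r$. $\widetilde{K}$ denotes the set of all $r\in K$ for which some finite set adequate for $r$ exists. $\mathbb{R}^{\mathrm{alg}}$ denotes the field of real algebraic numbers. *)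

(* Defs.v *)
From HB Require Import structures.
From mathcomp Require Import all_boot all_order all_algebra.
From mathcomp Require Import all_classical all_reals.
Set Implicit Arguments. Unset Strict Implicit. Unset Printing Implicit Defensive.
Import Order.TTheory GRing.Theory Num.Theory.
Local Open Scope ring_scope.

(* The finite set A(r) is represented by a finite sequence A : seq K
   (its set of elements).  A mapping A -> K is represented by any
   f : K -> K (only its values on A matter; every map A -> K extends). *)

Definition respects (K : fieldType) (A : seq K) (f : K -> K) : Prop :=
  [/\ (1 \in A -> f 1 = 1),
      (forall a b, a \in A -> b \in A -> a + b \in A -> f (a + b) = f a + f b) &
      (forall a b, a \in A -> b \in A -> a * b \in A -> f (a * b) = f a * f b)].

Definition adequate (K : fieldType) (r : K) (A : seq K) : Prop :=
  r \in A /\ forall f : K -> K, respects A f -> f r = r.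

Definition in_tilde (K : fieldType) (r : K) : Prop :=
  exists A : seq K, adequate r A.

(* Main.v *)
Require Import Defs.
From HB Require Import structures.
From mathcomp Require Import all_boot all_order all_algebra.
From mathcomp Require Import all_classical all_reals.
From mathcomp Require ordered_qelim qe_rcf qe_rcf_th polyrcf.
From mathcomp Require Import lra.
Local Open Scope ring_scope.

Module Dev.
Set Implicit Arguments. Unset Strict Implicit. Unset Printing Implicit Defensive.
Import Order.TTheory GRing.Theory Num.Theory.
Local Open Scope ring_scope.

Module O := ordered_qelim.ord.
Module Q := qe_rcf.
Import -(notations) ordered_qelim.ord.

Section RatInv.
Variable F : realFieldType.

Definition israt (c : F) := exists q : rat, c = ratr q.

Lemma israt_nat n : israt n%:R. Proof. by exists n%:R; rewrite rmorph_nat. Qed.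
Lemma israt_int (z : int) : israt z%:~R. Proof. by exists z%:~R; rewrite rmorph_int. Qed.
Lemma israt0 : israt 0. Proof. by exists 0; rewrite rmorph0. Qed.

Fixpoint tok (t : GRing.term F) : Prop :=
  match t with
  | GRing.Const c => israt c
  | GRing.Var _ | GRing.NatConst _ => Logic.True
  | GRing.Add u v | GRing.Mul u v => tok u /\ tok v
  | GRing.Opp u | GRing.Inv u | GRing.NatMul u _ | GRing.Exp u _ => tok u
  end.

Fixpoint fok (f : O.formula F) : Prop :=
  match f with
  | O.Bool _ => Logic.True
  | O.Equal a b | O.Lt a b | O.Le a b => tok a /\ tok b
  | O.Unit a => tok a
  | O.And f g | O.Or f g | O.Implies f g => fok f /\ fok g
  | O.Not f | O.Exists _ f | O.Forall _ f => fok f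
  end.

Definition qtok (t : Q.term F) := tok (Q.rterm_to_term t).
Definition qfok (f : Q.formula F) := fok (Q.qfr_to_formula f).
Fixpoint pok (p : Q.polyF F) : Prop :=
  match p with [::] => Logic.True | t :: p => qtok t /\ pok p end.
Fixpoint spok (s : seq (Q.polyF F)) : Prop :=
  match s with [::] => Logic.True | t :: p => pok t /\ spok p end.

Ltac okt := rewrite /qfok /qtok /Q.If /Q.bind_def /=;
  repeat match goal with
  | |- _ /\ _ => split
  | |- Logic.True => exact I
  | |- fok (Q.qfr_to_formula ?f) => change (qfok f)
  | |- tok (Q.rterm_to_term ?f) => change (qtok f)
  end; auto.

Lemma okSize p k : pok p -> (forall n, qfok (k n)) -> qfok (Q.Size p k).
Proof.
elim: p k => [|c p IH] k /=; first by move=> _; apply.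
case=> hc hp hk; rewrite /Q.bind_def; apply: IH => // -[|n]; last by apply: hk.
okt.
Qed.


Lemma israt_opp c : israt c -> israt (- c).
Proof. by case=> q ->; exists (- q); rewrite rmorphN. Qed.

Lemma okAmulXn a n : qtok a -> pok (Q.AmulXn a n).
Proof. by move=> ha; elim: n => [|n IH] /=; split => //; apply: israt0. Qed.

Lemma okAddPoly p q : pok p -> pok q -> pok (Q.AddPoly p q).
Proof.
elim: p q => [|a p IH] [|b q] //= [ha hp] [hb hq]; split; last exact: IH.
by split.
Qed.

Lemma okScalPoly c p : qtok c -> pok p -> pok (Q.ScalPoly c p).
Proof. by move=> hc; elim: p => [|a p IH] //= [ha hp]; split; [split|apply: IH]. Qed.

Lemma okMulPoly p q : pok p -> pok q -> pok (Q.MulPoly p q).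
Proof.
elim: p => [|a p IH] //= [ha hp] hq; apply: okAddPoly; first exact: okScalPoly.
by split => //; apply: IH.
Qed.

Lemma okExpPoly p n : pok p -> pok (Q.ExpPoly p n).
Proof.
move=> hp; rewrite /Q.ExpPoly; case: n => [|n] /=; first by [].
by elim: n => [|n IH] //=; apply: okMulPoly.
Qed.

Lemma okOppPoly p : pok p -> pok (Q.OppPoly p).
Proof. by apply: okScalPoly; rewrite /qtok /=; apply/israt_opp/(israt_nat 1). Qed.

Lemma okNatMulPoly n p : pok p -> pok (Q.NatMulPoly n p).
Proof. by apply: okScalPoly. Qed.

Lemma okHorner p x : pok p -> qtok x -> qtok (Q.Horner p x).
Proof. by move=> + hx; elim: p => [|a p IH] //= [ha hp]; okt. Qed.

Lemma okDeriv p : pok p -> pok (Q.Deriv p).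
Proof.
elim: p => [|a p IH] //= [ha hp]; apply: okAddPoly => //; split => //.
exact: IH.
Qed.

Ltac pokt := repeat first [ assumption | apply: okAddPoly | apply: okMulPoly
  | apply: okOppPoly | apply: okAmulXn | apply: okScalPoly | apply: okExpPoly
  | apply: okDeriv | apply: israt0 | split ].

Lemma okIsnull p k : pok p -> (forall b, qfok (k b)) -> qfok (Q.Isnull p k).
Proof. by move=> hp hk; apply: okSize. Qed.

Lemma okLtSize p q k : pok p -> pok q -> (forall b, qfok (k b)) -> qfok (Q.LtSize p q k).
Proof. by move=> hp hq hk; apply: okSize => // n; apply: okSize. Qed.

Lemma okLeadCoef p k : pok p -> (forall l, qtok l -> qfok (k l)) ->
  qfok (Q.LeadCoef p k).
Proof.
elim: p k => [|c p IH] k /=; first by move=> _; apply; apply: israt0.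
case=> hc hp hk; rewrite /Q.bind_def; apply: IH => // l hl; okt.
Qed.

Lemma okRediv_rec_loop q sq cq c qq r n k : pok q -> qtok cq -> pok qq -> pok r ->
  (forall c qq r, pok qq -> pok r -> qfok (k (c, qq, r))) ->
  qfok (Q.Rediv_rec_loop q sq cq c qq r n k).
Proof.
elim: n c qq r => [|n IH] c qq r hq hcq hqq hr hk /=; rewrite /Q.bind_def;
  apply: okSize => // sr; case: ifP => _; try exact: hk;
  apply: okLeadCoef => // lr hlr.
- by apply: hk; pokt.
- by apply: IH; pokt.
Qed.

Lemma okRediv p q k : pok p -> pok q ->
  (forall c qq r, pok qq -> pok r -> qfok (k (c, qq, r))) ->
  qfok (Q.Rediv p q k).
Proof.
move=> hp hq hk; rewrite /Q.Rediv /Q.bind_def; apply: okIsnull => // -[].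
  by apply: hk => //; split => //; apply: israt0.
apply: okSize => // sq; apply: okSize => // sp; apply: okLeadCoef => // lq hlq.
by apply: okRediv_rec_loop => //; split => //; apply: israt0.
Qed.

Lemma okRmod p q k : pok p -> pok q -> (forall r, pok r -> qfok (k r)) ->
  qfok (Q.Rmod p q k).
Proof. by move=> hp hq hk; apply: okRediv => // c qq r _ /hk. Qed.

Lemma okRscal p q k : pok p -> pok q -> (forall r, qfok (k r)) ->
  qfok (Q.Rscal p q k).
Proof. by move=> hp hq hk; apply: okRediv => // c qq r _ _; apply: hk. Qed.

Lemma okRgcd_loop n p q k : pok p -> pok q -> (forall r, pok r -> qfok (k r)) ->
  qfok (Q.Rgcd_loop n p q k).
Proof.
elim: n p q => [|n IH] p q hp hq hk /=; rewrite /Q.bind_def;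
  apply: okRmod => // r hr; apply: okIsnull => // -[]; try exact: hk.
exact: IH.
Qed.

Lemma okRgcd p q k : pok p -> pok q -> (forall r, pok r -> qfok (k r)) ->
  qfok (Q.Rgcd p q k).
Proof.
move=> hp hq hk; rewrite /Q.Rgcd /Q.bind_def; apply: okLtSize => // -[];
  (apply: okIsnull => //; case; [exact: hk|]);
  by apply: okSize => // n; apply: okRgcd_loop.
Qed.

Lemma okBigRgcd ps k : spok ps -> (forall r, pok r -> qfok (k r)) ->
  qfok (Q.BigRgcd ps k).
Proof.
elim: ps k => [|p ps IH] k /=; first by move=> _; apply; split => //; apply: israt0.
case=> hp hps hk; rewrite /Q.bind_def; apply: IH => // r hr; exact: okRgcd.
Qed.


Lemma okChanges s k : pok s -> (forall n, qfok (k n)) -> qfok (Q.Changes s k).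
Proof.
elim: s k => [|a s IH] k /=; first by move=> _; apply.
case=> ha hs hk; rewrite /Q.bind_def; apply: IH => // v.
by case: s hs => [|b s] hs; okt; case: hs.
Qed.

Lemma okSeqPInfty ps k : spok ps -> (forall s, pok s -> qfok (k s)) ->
  qfok (Q.SeqPInfty ps k).
Proof.
elim: ps k => [|p ps IH] k /=; first by move=> _; apply.
case=> hp hps hk; rewrite /Q.bind_def; apply: okLeadCoef => // l hl.
by apply: IH => // s hs; apply: hk.
Qed.

Lemma okSeqMInfty ps k : spok ps -> (forall s, pok s -> qfok (k s)) ->
  qfok (Q.SeqMInfty ps k).
Proof.
elim: ps k => [|p ps IH] k /=; first by move=> _; apply.
case=> hp hps hk; rewrite /Q.bind_def; apply: okLeadCoef => // l hl.
apply: okSize => // sp; apply: IH => // s hs; apply: hk; split => //.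
by rewrite /qtok /=; split => //; apply/israt_opp/(israt_nat 1).
Qed.

Lemma okChangesPoly ps k : spok ps -> (forall z, qfok (k z)) -> qfok (Q.ChangesPoly ps k).
Proof.
move=> hps hk; rewrite /Q.ChangesPoly /Q.bind_def.
apply: okSeqMInfty => // s hs; apply: okSeqPInfty => // s' hs'.
by apply: okChanges => // v; apply: okChanges.
Qed.

Lemma okNextMod p q k : pok p -> pok q -> (forall r, pok r -> qfok (k r)) ->
  qfok (Q.NextMod p q k).
Proof.
move=> hp hq hk; rewrite /Q.NextMod /Q.bind_def; apply: okLeadCoef => // l hl.
apply: okRscal => // sp; apply: okRmod => // r hr; apply: hk.
by apply: okScalPoly.
Qed.

Lemma okModsAux p q n k : pok p -> pok q -> (forall s, spok s -> qfok (k s)) ->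
  qfok (Q.ModsAux p q n k).
Proof.
elim: n p q k => [|n IH] p q k hp hq hk /=; first by apply: hk.
rewrite /Q.bind_def; apply: okIsnull => // -[]; first by apply: hk.
by apply: okNextMod => // r hr; apply: IH => // s hs; apply: hk.
Qed.

Lemma okMods p q k : pok p -> pok q -> (forall s, spok s -> qfok (k s)) ->
  qfok (Q.Mods p q k).
Proof.
move=> hp hq hk; rewrite /Q.Mods /Q.bind_def; apply: okSize => // sp.
by apply: okSize => // sq; apply: okModsAux.
Qed.

Lemma spok_nth sq i : spok sq -> pok (nth [::] sq i).
Proof. elim: sq i => [|p sq IH] i /=; first by case: i. by move=> [hp hsq]; case: i => [|i] //=; apply: IH. Qed.

Lemma okPolyComb sq sc : spok sq -> pok (Q.PolyComb sq sc).
Proof.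
move=> hsq; rewrite /Q.PolyComb /reducebig.
elim: (iota _ _) => [|i l IH] /=; first by split.
by apply: okMulPoly => //; apply/okExpPoly/spok_nth.
Qed.

Lemma okPcq sq i : spok sq -> pok (Q.Pcq sq i).
Proof.
move=> hsq; rewrite /Q.Pcq.
elim: (qe_rcf_th.sg_tab _) i => [|a l IH] [|i] //=; exact: okPolyComb.
Qed.

Lemma okTaqR p q k : pok p -> pok q -> (forall z, qfok (k z)) -> qfok (Q.TaqR p q k).
Proof.
move=> hp hq hk; rewrite /Q.TaqR /Q.bind_def.
by apply: okMods => //; [pokt | move=> s hs; apply: okChangesPoly].
Qed.

Lemma okTaqsR p sq i k : pok p -> spok sq -> (forall t, qtok t -> qfok (k t)) ->
  qfok (Q.TaqsR p sq i k).
Proof.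
move=> hp hsq hk; rewrite /Q.TaqsR /Q.bind_def; apply: okTaqR => //.
  exact: okPcq.
by move=> n; apply: hk; apply: israt_int.
Qed.

Lemma israt_nth s i : (forall x, x \in s -> israt x) -> israt (nth 0 s i).
Proof.
move=> hs; have [lti|] := ltnP i (size s); first by apply/hs/mem_nth.
by move=> /(nth_default 0) ->; apply: israt0.
Qed.

Lemma israt_coefs n i : israt (qe_rcf_th.coefs F n i).
Proof.
rewrite /qe_rcf_th.coefs /=; apply: israt_nth => x /mapP [i0 _ ->].
rewrite castmxE.
have -> : map_mx (intr : int -> F) (qe_rcf_th.ctmat n) =
    map_mx (ratr : rat -> F) (map_mx (intr : int -> rat) (qe_rcf_th.ctmat n)).
  by apply/matrixP => a b; rewrite !mxE rmorph_int.
by rewrite -map_invmx mxE; eexists.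
Qed.

Lemma okCoefs n i : qtok (Q.Coefs F n i).
Proof.
rewrite /qtok /Q.Coefs /=; case: n => [|[|n]]; first exact: israt_nat.
  have h2 : israt (2%:R^-1 : F) by exists 2%:R^-1; rewrite fmorphV rmorph_nat.
  by case: i => [|[|[|i]]] //=; rewrite ?nth_nil; apply: israt0.
exact: israt_coefs.
Qed.

Lemma okCcountWeak p sq k : pok p -> spok sq -> (forall t, qtok t -> qfok (k t)) ->
  qfok (Q.CcountWeak p sq k).
Proof.
move=> hp hsq hk; rewrite /Q.CcountWeak.
have : qtok (Q.NatConst F 0) by [].
elim: (3 ^ _)%N (Q.NatConst F 0) => [|i IH] s hs /=; first exact: hk.
rewrite /Q.bind_def; apply: okTaqsR => // t ht; apply: IH.
by rewrite /qtok /=; split; [split => //; apply: okCoefs|].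
Qed.

Lemma okBoundingPoly sq : spok sq -> pok (Q.BoundingPoly sq).
Proof.
move=> hsq; rewrite /Q.BoundingPoly; apply: okDeriv; rewrite /reducebig.
by elim: sq hsq => [|q sq IH] /= => [_|[hq /IH h]]; [split|apply: okMulPoly].
Qed.

Lemma okCcountGt0 sp sq : spok sp -> spok sq -> qfok (Q.CcountGt0 sp sq).
Proof.
move=> hsp hsq; rewrite /Q.CcountGt0 /Q.bind_def; apply: okBigRgcd => // p hp.
apply: okIsnull => // -[] /=; last first.
  by apply: okCcountWeak => // t ht; okt.
apply: okCcountWeak => //; first exact: okBoundingPoly.
move=> t ht; rewrite /qfok /=; split; [|split; [|by split]].
- rewrite /reducebig; elim: sq hsq {hsp} => [|q sq IH] /=; first by [].
  case=> hq /IH h; split => //; change (qfok (Q.LeadCoef q (Q.Lt (Q.NatConst F 0)))).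
  by apply: okLeadCoef => // l hl; okt.
- rewrite /reducebig; elim: sq hsq {hsp} => [|q sq IH] /=; first by [].
  case=> hq /IH h; split => //; change (qfok (Q.Size q (fun sq0 : nat =>
                 Q.LeadCoef q
                   (fun lq : Q.term F =>
                    Q.Lt (Q.NatConst F 0)
                      (Q.Mul (Q.Exp (Q.Opp (Q.NatConst F 1)) sq0.-1) lq))))).
  by apply: okSize => // n; apply: okLeadCoef => // l hl; okt.
Qed.


Lemma okabstrX i t : qtok t -> pok (Q.abstrX i t).
Proof.
elim: t.
- by move=> n _ /=; case: (n == i).
- by move=> c hc /=.
- by move=> n /=.
- by move=> u hu v hv [/hu ? /hv ?]; apply: okAddPoly.
- by move=> u hu /hu ?; apply: okOppPoly.
- by move=> u hu n /hu ?; apply: okNatMulPoly.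
- by move=> u hu v hv [/hu ? /hv ?]; apply: okMulPoly.
- by move=> u hu n /hu ?; apply: okExpPoly.
Qed.

Lemma okto_rterm t : tok t -> qtok (Q.to_rterm t).
Proof.
by elim: t => //= [u hu v hv [/hu ? /hv ?]|u hu v hv [/hu ? /hv ?]]; split.
Qed.

Definition lok (l : seq (GRing.term F)) := forall t, t \in l -> tok t.

Lemma okwproj n s : lok s.1 -> lok s.2 -> fok (Q.qfr_to_formula (Q.wproj n s)).
Proof.
case: s => s1 s2 /= h1 h2; apply: okCcountGt0.
- by elim: s1 h1 => [|a l IH] //= h; split;
    [apply/okabstrX/okto_rterm/h/mem_head | apply: IH => t ht; apply/h/mem_behead].
- by elim: s2 h2 => [|a l IH] //= h; split;
    [apply/okabstrX/okto_rterm/h/mem_head | apply: IH => t ht; apply/h/mem_behead].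
Qed.

End RatInv.

Section OrdInv.
Variable F : realFieldType.
Local Notation tok := (@tok F).
Local Notation fok := (@fok F).
Local Notation lok := (@lok F).

Definition ocok (oc : O.oclause F) := lok (O.terms_of_oclause oc).

Lemma lok_cat l1 l2 : lok (l1 ++ l2) <-> lok l1 /\ lok l2.
Proof.
split=> [h|[h1 h2] t]; first by split=> t ht; apply: h; rewrite mem_cat ht ?orbT.
by rewrite mem_cat => /orP[/h1|/h2].
Qed.

Lemma lok_cons t l : lok (t :: l) <-> tok t /\ lok l.
Proof.
split=> [h|[h1 h2] u]; first by split; [apply/h/mem_head|move=> u hu; apply/h/mem_behead].
by rewrite inE => /orP[/eqP->|/h2].
Qed.

Lemma lok_nil : lok [::]. Proof. by []. Qed.

Lemma okodnf_to_oform bcs : (forall bc, bc \in bcs -> ocok bc) ->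
  fok (O.odnf_to_oform bcs).
Proof.
elim: bcs => [|[l1 l2 l3 l4] bcs IH] //= h; split; last first.
  by apply: IH => bc hbc; apply/h/mem_behead.
have := h _ (mem_head _ _); rewrite /ocok /= !lok_cat => -[h1 [h2 [h3 h4]]].
split; first by elim: l1 h1 {h} => //= a l IHl /lok_cons [? /IHl]; do !split.
split; first by elim: l2 h2 {h} => //= a l IHl /lok_cons [? /IHl]; do !split.
split; first by elim: l3 h3 {h} => //= a l IHl /lok_cons [? /IHl]; do !split.
by elim: l4 h4 {h} => //= a l IHl /lok_cons [? /IHl]; do !split.
Qed.

Lemma okand_odnf bcs1 bcs2 : (forall bc, bc \in bcs1 -> ocok bc) ->
  (forall bc, bc \in bcs2 -> ocok bc) ->
  forall bc, bc \in O.and_odnf bcs1 bcs2 -> ocok bc.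
Proof.
rewrite /O.and_odnf; elim: bcs1 => [|bc1 bcs1 IH] h1 h2 bc; first by rewrite big_nil.
rewrite big_cons mem_cat => /orP[|]; last first.
  by apply: IH => // b hb; apply/h1/mem_behead.
move=> /mapP [bc2 hbc2 ->]; have := h1 _ (mem_head _ _); have := h2 _ hbc2.
case: bc1 {h1} => a1 a2 a3 a4; case: bc2 {hbc2} => b1 b2 b3 b4.
rewrite /ocok /= !lok_cat; tauto.
Qed.

Lemma okqf_to_odnf f b : fok f -> forall bc, bc \in O.qf_to_odnf f b -> ocok bc.
Proof.
elim: f b => //=.
- by move=> c b _ bc; case: ifP => // _; rewrite inE => /eqP ->.
- move=> t1 t2 [] [h1 h2] bc; rewrite inE => /eqP -> t /=;
    by rewrite ?cats0 /= inE => /eqP ->.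
- move=> t1 t2 [] [h1 h2] bc; rewrite inE => /eqP -> t /=;
    by rewrite ?cats0 /= inE => /eqP ->.
- move=> t1 t2 [] [h1 h2] bc; rewrite inE => /eqP -> t /=;
    by rewrite ?cats0 /= inE => /eqP ->.
- by move=> t [] _ bc //; rewrite inE => /eqP ->.
- move=> f1 IH1 f2 IH2 [] [/IH1 h1 /IH2 h2] bc.
    by rewrite mem_cat => /orP[/h1|/h2].
  by apply: okand_odnf; [apply: h1|apply: h2].
- move=> f1 IH1 f2 IH2 [] [/IH1 h1 /IH2 h2] bc.
    by apply: okand_odnf; [apply: h1|apply: h2].
  by rewrite mem_cat => /orP[/h1|/h2].
- move=> f1 IH1 f2 IH2 [] [/IH1 h1 /IH2 h2] bc.
    by apply: okand_odnf; [apply: h1|apply: h2].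
  by rewrite mem_cat => /orP[/h1|/h2].
- by move=> f1 IH1 b /IH1; apply.
- by move=> n f1 IH1 [] _ bc //; rewrite inE => /eqP ->.
- by move=> n f1 IH1 [] _ bc //; rewrite inE => /eqP ->.
Qed.

Variable wp : nat -> seq (GRing.term F) * seq (GRing.term F) -> O.formula F.
Hypothesis okwp : forall n s, lok s.1 -> lok s.2 -> fok (wp n s).

Lemma okproj n oc : ocok oc -> fok (O.proj wp n oc).
Proof.
move=> hoc; rewrite /O.proj /O.oclause_to_w.
have : forall oc2, oc2 \in O.oclause_neq_leq_elim oc -> ocok oc2.
  move=> oc2 /O.terms_of_neq_leq_elim hsub t /hsub; rewrite mem_cat => /orP[/hoc//|].
  move=> /mapP [u hu ->] /=; apply: hoc; case: oc {hsub} hu => a b c d /= hu.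
  by rewrite !mem_cat hu orbT.
elim: (O.oclause_neq_leq_elim oc) => [|oc2 l IH] //= h; split.
  case: oc2 h => a b c d h; have := h _ (mem_head _ _); rewrite /ocok /= !lok_cat.
  by case=> ha [_ [hc _]]; apply: okwp.
by apply: IH => oc3 h3; apply/h/mem_behead.
Qed.

Lemma okelim f n b : fok f ->
  fok (foldr O.Or (O.Bool false) [seq O.proj wp n i | i <- O.qf_to_odnf f b]).
Proof.
move=> /(okqf_to_odnf (b:=b)); elim: (O.qf_to_odnf f b) => [|bc l IH] //= h.
split; first by apply/okproj/h/mem_head.
by apply: IH => b0 hb; apply/h/mem_behead.
Qed.

Lemma okquantifier_elim f : fok f -> fok (O.quantifier_elim wp f).
Proof.
elim: f => //=.
- by move=> f1 IH1 f2 IH2 [/IH1 ? /IH2 ?].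
- by move=> f1 IH1 f2 IH2 [/IH1 ? /IH2 ?].
- by move=> f1 IH1 f2 IH2 [/IH1 ? /IH2 ?].
- by move=> n g IHg hg; apply: okelim; apply: IHg.
- by move=> n g IHg hg; apply: okelim; apply: IHg.
Qed.

End OrdInv.

Import polyrcf.

Section Analytic.
Variable R : rcfType.
Local Notation tok := (@tok R).
Local Notation fok := (@fok R).

Lemma term_poly (t : GRing.term R) : GRing.rterm t -> tok t ->
  exists p : {poly rat}, forall x : R, GRing.eval [:: x] t = (map_poly ratr p).[x].
Proof.
elim: t => /=.
- move=> [|i] _ _; first by exists 'X => x; rewrite map_polyX hornerX.
  by exists 0 => x; rewrite rmorph0 horner0 /= nth_nil.
- by move=> c _ [q ->]; exists q%:P => x; rewrite map_polyC hornerC.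
- by move=> n _ _; exists (n%:R)%:P => x; rewrite map_polyC hornerC /= rmorph_nat.
- move=> u hu v hv /andP[ru rv] [/(hu ru) [p hp] /(hv rv) [q hq]].
  by exists (p + q) => x; rewrite rmorphD hornerD hp hq.
- move=> u hu ru /(hu ru) [p hp].
  by exists (- p) => x; rewrite rmorphN hornerN hp.
- move=> u hu n ru /(hu ru) [p hp].
  by exists (p *+ n) => x; rewrite rmorphMn hornerMn hp.
- move=> u hu v hv /andP[ru rv] [/(hu ru) [p hp] /(hv rv) [q hq]].
  by exists (p * q) => x; rewrite rmorphM hornerM hp hq.
- by [].
- move=> u hu n ru /(hu ru) [p hp].
  by exists (p ^+ n) => x; rewrite rmorphXn horner_exp hp.
Qed.

Variable r : R.
Hypothesis tr : ~ algebraicOver (@ratr R) r.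

Lemma sign_const (p : {poly rat}) : exists2 d : R, 0 < d & forall x, r < x < r + d ->
  ((0 < (map_poly ratr p).[x]) = (0 < (map_poly ratr p).[r])) /\
  (((map_poly ratr p).[x] == 0) = ((map_poly ratr p).[r] == 0)).
Proof.
have [->|pn0] := eqVneq p 0.
  by exists 1 => // x _; rewrite rmorph0 !horner0.
set P := map_poly ratr p.
have Pr : P.[r] != 0.
  by apply/negP => /eqP h; apply: tr; exists p => //; rewrite /root h.
have hPr : 0 < `|P.[r]| by rewrite normr_gt0.
have [d d0 hd] := poly_cont r P hPr.
exists d => // x /andP[rx xd].
have /hd : `|x - r| < d by rewrite ger0_norm ?subr_ge0 ?ltW // ltrBlDl.
move=> /ltr_normlP [h1 h2].
have [Pp|Pn|Pz] := ltrgtP 0 P.[r]; last by rewrite Pz eqxx in Pr.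
- have : 0 < P.[x] by move: h1 h2; rewrite gtr0_norm //; lra.
  by move=> Px; rewrite Px gt_eqF.
- have : P.[x] < 0 by move: h1 h2; rewrite ltr0_norm //; lra.
  by move=> Px; rewrite lt_gtF // lt_eqF.
Qed.

Lemma combine_d (P1 P2 : R -> Prop) :
  (exists2 d : R, 0 < d & forall x, r < x < r + d -> P1 x) ->
  (exists2 d : R, 0 < d & forall x, r < x < r + d -> P2 x) ->
  exists2 d : R, 0 < d & forall x, r < x < r + d -> P1 x /\ P2 x.
Proof.
move=> [d1 d10 h1] [d2 d20 h2]; exists (Num.min d1 d2); first by rewrite lt_min d10.
move=> x /andP[rx]; rewrite -ltrBlDl lt_min => /andP[x1 x2].
by split; [apply: h1|apply: h2]; rewrite rx -ltrBlDl.
Qed.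

Lemma qf_locconst f : O.qf_form f -> O.rformula f -> fok f ->
  exists2 d : R, 0 < d & forall x, r < x < r + d ->
    O.qf_eval [:: x] f = O.qf_eval [:: r] f.
Proof.
elim: f => //=.
- by move=> b _ _ _; exists 1.
- move=> t1 t2 _ /andP[r1 r2] [o1 o2].
  have [p1 hp1] := term_poly r1 o1; have [p2 hp2] := term_poly r2 o2.
  have E y : (GRing.eval [:: y] t1 == GRing.eval [:: y] t2) =
      ((map_poly ratr (p1 - p2)).[y] == 0) by rewrite rmorphB hornerD hornerN hp1 hp2 subr_eq0.
  have [d d0 hd] := sign_const (p1 - p2); exists d => // x /hd [_ h].
  by rewrite !E h.
- move=> t1 t2 _ /andP[r1 r2] [o1 o2].
  have [p1 hp1] := term_poly r1 o1; have [p2 hp2] := term_poly r2 o2.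
  have E y : (GRing.eval [:: y] t1 < GRing.eval [:: y] t2) =
      (0 < (map_poly ratr (p2 - p1)).[y]) by rewrite rmorphB hornerD hornerN hp1 hp2 subr_gt0.
  have [d d0 hd] := sign_const (p2 - p1); exists d => // x /hd [h _].
  by rewrite !E h.
- move=> t1 t2 _ /andP[r1 r2] [o1 o2].
  have [p1 hp1] := term_poly r1 o1; have [p2 hp2] := term_poly r2 o2.
  have E y : (GRing.eval [:: y] t1 <= GRing.eval [:: y] t2) =
      ((map_poly ratr (p2 - p1)).[y] == 0) || (0 < (map_poly ratr (p2 - p1)).[y]).
    by rewrite rmorphB hornerD hornerN hp1 hp2 -subr_ge0 le_eqVlt eq_sym.
  have [d d0 hd] := sign_const (p2 - p1); exists d => // x /hd [h h'].
  by rewrite !E h h'.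
- move=> f1 IH1 f2 IH2 /andP[q1 q2] /andP[r1 r2] [o1 o2].
  have [d d0 hd] := combine_d (IH1 q1 r1 o1) (IH2 q2 r2 o2).
  by exists d => // x /hd [-> ->].
- move=> f1 IH1 f2 IH2 /andP[q1 q2] /andP[r1 r2] [o1 o2].
  have [d d0 hd] := combine_d (IH1 q1 r1 o1) (IH2 q2 r2 o2).
  by exists d => // x /hd [-> ->].
- move=> f1 IH1 f2 IH2 /andP[q1 q2] /andP[r1 r2] [o1 o2].
  have [d d0 hd] := combine_d (IH1 q1 r1 o1) (IH2 q2 r2 o2).
  by exists d => // x /hd [-> ->].
- move=> f1 IH1 q1 r1 o1; have [d d0 hd] := IH1 q1 r1 o1.
  by exists d => // x /hd ->.
Qed.

Lemma qf_other f : O.qf_form f -> O.rformula f -> fok f -> O.qf_eval [:: r] f ->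
  exists2 x, x != r & O.qf_eval [:: x] f.
Proof.
move=> q1 r1 o1 h; have [d d0 hd] := qf_locconst q1 r1 o1.
exists (r + d / 2); first by rewrite -subr_eq0 addrAC subrr add0r gt_eqF ?divr_gt0.
by rewrite hd //; apply/andP; split; lra.
Qed.

End Analytic.

Section Forward.
Variable R : rcfType.

Definition bigAnd (l : seq nat) (g : nat -> O.formula R) :=
  foldr (fun i f => O.And (g i) f) (O.Bool true) l.

Definition cl (s : seq R) i j k : O.formula R :=
 O.And (if s`_i + s`_j == s`_k then
          O.Equal (GRing.Add (GRing.Var _ i) (GRing.Var _ j)) (GRing.Var _ k)
        else O.Bool true)
 (O.And (if s`_i * s`_j == s`_k then
          O.Equal (GRing.Mul (GRing.Var _ i) (GRing.Var _ j)) (GRing.Var _ k)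
        else O.Bool true)
        (if s`_i == 1 then O.Equal (GRing.Var _ i) (GRing.NatConst _ 1)
         else O.Bool true)).

Definition relf s := let I := iota 0 (size s) in
  bigAnd I (fun i => bigAnd I (fun j => bigAnd I (fun k => cl s i j k))).

Definition phi s := foldr (fun i f => O.Exists i f) (relf s) (iota 1 (size s).-1).

Definition Rel (s : seq R) (g : nat -> R) := forall i j k,
  (i < size s)%N -> (j < size s)%N -> (k < size s)%N ->
  [/\ s`_i + s`_j = s`_k -> g i + g j = g k,
      s`_i * s`_j = s`_k -> g i * g j = g k &
      s`_i = 1 -> g i = 1].

Lemma holds_bigAnd e l g :
  O.holds e (bigAnd l g) <-> (forall i, i \in l -> O.holds e (g i)).
Proof.
elim: l => [|a l IH] /=; first by split.
rewrite IH; split=> [[ha hl] i|h]; first by rewrite inE => /orP[/eqP->|/hl].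
by split=> [|i hi]; apply: h; rewrite inE ?eqxx ?hi ?orbT.
Qed.

Lemma holds_cl e s i j k : O.holds e (cl s i j k) <->
  [/\ s`_i + s`_j = s`_k -> e`_i + e`_j = e`_k,
      s`_i * s`_j = s`_k -> e`_i * e`_j = e`_k &
      s`_i = 1 -> e`_i = 1].
Proof.
have H (b : bool) F : O.holds e (if b then F else O.Bool true) <-> (b -> O.holds e F).
  by case: b; split=> //=; auto.
rewrite /cl /= !H /=; split=> [[h1 [h2 h3]]|[h1 h2 h3]].
  by split=> /eqP; [apply: h1|apply: h2|move=> /h3 ->].
by split; [|split]=> /eqP; [apply: h1|apply: h2|move=> /h3 ->].
Qed.

Lemma holds_relf e s : O.holds e (relf s) <-> Rel s (nth 0 e).
Proof.
rewrite /relf holds_bigAnd; split=> h.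
  move=> i j k hi hj hk; have := h i; rewrite mem_iota /= => /(_ hi) /holds_bigAnd.
  move=> /(_ j); rewrite mem_iota /= => /(_ hj) /holds_bigAnd.
  by move=> /(_ k); rewrite mem_iota /= => /(_ hk) /holds_cl.
move=> i; rewrite mem_iota /= => hi; apply/holds_bigAnd => j.
rewrite mem_iota /= => hj; apply/holds_bigAnd => k; rewrite mem_iota /= => hk.
by apply/holds_cl; apply: h.
Qed.

Lemma holds_exists_iter C a k e :
  O.holds e (foldr (fun i f => O.Exists i f) C (iota a k)) <->
  exists g : seq R, (forall i, (i < a)%N \/ (a + k <= i)%N -> g`_i = e`_i) /\ O.holds g C.
Proof.
elim: k a e => [|k IH] a e /=.
  split=> [h|[g [hg hC]]]; first by exists e.
  by apply: O.eq_holds hC => i; apply: hg; rewrite addn0; case: (ltnP i a); [left|right].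
split=> [[x /IH [g [hg hC]]]|[g [hg hC]]].
  exists g; split=> // i hi; rewrite hg ?nth_set_nth /=.
    case: eqP hi => // -> [].
      by rewrite ltnn.
    by rewrite addnS ltnNge leq_addr.
  by case: hi => [/ltnW|]; [left | rewrite addSnnS; right].
exists g`_a; apply/IH; exists g; split=> // i hi; rewrite nth_set_nth /=.
case: eqP => [->//|/eqP ne]; apply: hg; case: hi => [|h]; last by right; rewrite -addSnnS.
by rewrite ltnS leq_eqVlt (negbTE ne) /=; left.
Qed.

Lemma holds_phi s x : (0 < size s)%N ->
  O.holds [:: x] (phi s) <-> exists g : seq R, g`_0 = x /\ Rel s (nth 0 g).
Proof.
move=> s0; rewrite /phi holds_exists_iter; split=> [[g [hg hC]]|[g [hg hC]]].
  by exists g; split; [apply: hg; left|apply/holds_relf].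
exists (mkseq (nth 0 g) (size s)); split.
  move=> [|i] [] //=; first by rewrite nth_mkseq.
  rewrite nth_nil add1n prednK // => hi; rewrite nth_default //.
  by rewrite size_mkseq.
apply/holds_relf => i j k hi hj hk; rewrite !nth_mkseq //; exact: hC.
Qed.


Lemma rformula_bigAnd l g : (forall i, O.rformula (g i)) -> O.rformula (bigAnd l g).
Proof. by move=> h; elim: l => //= a l ->; rewrite h. Qed.

Lemma fok_bigAnd l g : (forall i, fok (g i)) -> fok (bigAnd l g).
Proof. by move=> h; elim: l => //= a l IH; split. Qed.

Lemma rformula_phi s : O.rformula (phi s).
Proof.
have H : O.rformula (relf s).
  rewrite /relf; do 3 apply: rformula_bigAnd => ?; rewrite /cl /=.
  by do 3 case: ifP => _ //=.
by rewrite /phi; elim: (iota _ _) => //= _ l ->.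
Qed.

Lemma fok_phi s : fok (phi s).
Proof.
have H : fok (relf s).
  rewrite /relf; do 3 apply: fok_bigAnd => ?; rewrite /cl /=.
  by do 3 case: ifP => _ //=.
by rewrite /phi; elim: (iota _ _) => //= _ l ->.
Qed.

Lemma forward (r : R) : in_tilde r -> algebraicOver (@ratr R) r.
Proof.
case=> A [rA hA]; case: (pselect (algebraicOver (@ratr R) r)) => // tr; exfalso.
set s := r :: A.
have s0 : (0 < size s)%N by [].
have hphi : O.holds [:: r] (phi s).
  by apply/holds_phi => //; exists s; split => // i j k _ _ _; split.
have rf := rformula_phi s.
pose wp := fun n bc => Q.qfr_to_formula (@Q.wproj R n bc).
have P := @O.quantifier_elim_rformP R wp (@Q.wf_QE_wproj R) (@Q.valid_QE_wproj R).
have hq := introT (P [:: r] _ rf) hphi.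
have /andP [qf rq] := @O.quantifier_elim_wf R wp (@Q.wf_QE_wproj R) _ rf.
have okq : fok (O.quantifier_elim wp (phi s)).
  apply: okquantifier_elim; last exact: fok_phi.
  by move=> n bc h1 h2; apply: okwproj.
have [x xr hx] := qf_other tr qf rq okq hq.
have /holds_phi [//|g [g0 hg]] := elimT (P [:: x] _ rf) hx.
pose f := fun y => g`_(index y s).
have inS a : a \in A -> a \in s by rewrite inE => ->; rewrite orbT.
have iS a : a \in A -> (index a s < size s)%N by move=> /inS; rewrite index_mem.
have nI a : a \in A -> s`_(index a s) = a by move=> /inS; apply: nth_index.
have resp : respects A f.
  split.
  - move=> h1; have [_ _] := hg _ _ _ (iS _ h1) (iS _ h1) (iS _ h1).
    by apply; rewrite nI.
  - move=> a b ha hb hab; have [+ _ _] := hg _ _ _ (iS _ ha) (iS _ hb) (iS _ hab).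
    by rewrite /f => h; symmetry; apply: h; rewrite !nI.
  - move=> a b ha hb hab; have [_ + _] := hg _ _ _ (iS _ ha) (iS _ hb) (iS _ hab).
    by rewrite /f => h; symmetry; apply: h; rewrite !nI.
have := hA f resp; rewrite /f /= eqxx /= g0 => hx0.
by rewrite hx0 eqxx in xr.
Qed.

End Forward.

Section Backward.
Variable R : realType.
Implicit Types (A : seq R) (f : R -> R).

Lemma resp_sub A B f : {subset B <= A} -> respects A f -> respects B f.
Proof.
move=> sBA [h1 h2 h3]; split.
- by move=> /sBA; apply: h1.
- by move=> a b /sBA ha /sBA hb /sBA hab; apply: h2.
- by move=> a b /sBA ha /sBA hb /sBA hab; apply: h3.
Qed.

Lemma force0 A f : respects A f -> 0 \in A -> f 0 = 0.
Proof.
case=> _ h _ h0; have := h 0 0 h0 h0; rewrite addr0 => /(_ h0) E.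
by apply: (addrI (f 0)); rewrite addr0 -E.
Qed.

Lemma forceN A f a : respects A f -> 0 \in A -> a \in A -> - a \in A -> f (- a) = - f a.
Proof.
move=> hr h0 ha hna; have [_ h _] := hr.
have := h _ _ hna ha; rewrite addNr => /(_ h0); rewrite (force0 hr h0) => E.
by apply: (addIr (f a)); rewrite -E addNr.
Qed.

Lemma forcenat A f M : respects A f -> (forall i, (i <= M)%N -> i%:R \in A) ->
  (0 < M)%N -> forall i, (i <= M)%N -> f i%:R = i%:R.
Proof.
move=> hr hA M0; have [h1 h _] := hr.
have f1 : f 1 = 1 by apply: h1; have := hA 1%N M0.
elim=> [|i IH] hi; first by apply: (force0 hr); apply: (hA 0%N).
have hiA := hA _ (ltnW hi).
rewrite -addn1 natrD h ?IH ?f1 ?(ltnW hi) //; first exact: (hA 1%N M0).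
by rewrite -natrD addn1; apply: hA.
Qed.

Definition ints M : seq R :=
  [seq (i%:R : R) | i <- iota 0 M.+1] ++ [seq - (i%:R : R) | i <- iota 0 M.+1].

Lemma forceint A f M : respects A f -> {subset ints M <= A} -> (0 < M)%N ->
  forall z : int, (absz z <= M)%N -> z%:~R \in A /\ f z%:~R = z%:~R.
Proof.
move=> hr sA M0.
have inA i : (i <= M)%N -> i%:R \in A.
  by move=> hi; apply: sA; rewrite mem_cat; apply/orP; left; apply/mapP; exists i => //; rewrite mem_iota.
have inAN i : (i <= M)%N -> - i%:R \in A.
  by move=> hi; apply: sA; rewrite mem_cat; apply/orP; right; apply/mapP; exists i => //; rewrite mem_iota.
have fn := forcenat hr inA M0.
case=> n /= hn.
  by rewrite -pmulrn; split; [apply: inA|apply: fn].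
rewrite NegzE mulrNz -pmulrn; split; first exact: inAN.
by rewrite (forceN hr) ?fn //; [apply: (inA 0%N)|apply: inA|apply: inAN].
Qed.

Definition ratset (c : rat) : seq R := [:: ratr c].

Lemma forcerat A f M (c : rat) : respects A f -> {subset ints M <= A} -> (0 < M)%N ->
  (absz (numq c) <= M)%N -> (absz (denq c) <= M)%N -> ratr c \in A ->
  f (ratr c) = ratr c.
Proof.
move=> hr sA M0 hn hd hc; have [_ _ h] := hr.
have [nA fn] := forceint hr sA M0 hn; have [dA fd] := forceint hr sA M0 hd.
have dn0 : (denq c)%:~R != 0 :> R by rewrite intr_eq0 denq_neq0.
have E : ratr c * (denq c)%:~R = (numq c)%:~R :> R.
  by rewrite /ratr divfK.
have := h _ _ hc dA; rewrite E => /(_ nA); rewrite fn fd => E2.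
by apply: (mulIf dn0); rewrite -E2 E.
Qed.

Fixpoint hset (cs : seq R) (x : R) : seq R :=
  match cs with
  | [::] => [:: 0]
  | c :: s => [:: horner_rec (c :: s) x; horner_rec s x * x; c] ++ hset s x
  end.

Lemma hrec_in cs x : horner_rec cs x \in hset cs x.
Proof. by case: cs => [|c s] /=; rewrite mem_head. Qed.

Lemma forcehorner A f cs r : respects A f -> {subset hset cs r <= A} -> r \in A ->
  (forall c, c \in cs -> f c = c) -> f (horner_rec cs r) = horner_rec cs (f r).
Proof.
move=> hr; have [_ h2 h3] := hr.
elim: cs => [|c s IH] /= hA rA hc.
  by apply: (force0 hr); apply: hA; rewrite mem_head.
have hA' : {subset hset s r <= A}.
  by move=> x hx; apply: hA; rewrite !inE hx !orbT.
have sA : horner_rec s r \in A by apply/hA'/hrec_in.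
have mA : horner_rec s r * r \in A by apply: hA; rewrite !inE eqxx orbT.
have cA : c \in A by apply: hA; rewrite !inE eqxx !orbT.
have tA : horner_rec s r * r + c \in A by apply: hA; rewrite !inE eqxx.
rewrite h2 // h3 // IH // => [|x hx]; first by rewrite (hc c (mem_head _ _)).
by apply: hc; rewrite inE hx orbT.
Qed.

Lemma isolate (P : {poly R}) (r : R) : P != 0 -> exists a b : rat,
  [/\ ratr a < r, r < ratr b &
      forall y, ratr a <= y -> y <= ratr b -> root P y -> y = r].
Proof.
move=> P0.
pose d := foldr (fun s acc => Num.min acc (if s == r then 1 else `|s - r|)) 1 (rootsR P).
have d0 : 0 < d.
  rewrite /d; elim: (rootsR P) => [|s l IH] //=; rewrite lt_min IH /=.
  by case: eqP => // /eqP; rewrite -subr_eq0 -normr_gt0.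
have dle y : y \in rootsR P -> y != r -> d <= `|y - r|.
  rewrite /d; elim: (rootsR P) => [|s l IH] //= hy yr; rewrite ge_min.
  move: hy; rewrite inE => /orP[/eqP ys|hl].
    by rewrite -ys (negbTE yr) lexx orbT.
  by rewrite (IH hl yr).
have [a] : exists a : rat, ratr a \in `]r - d, r[ by apply: rat_in_itvoo; lra.
have [b] : exists b : rat, ratr b \in `]r, r + d[ by apply: rat_in_itvoo; lra.
rewrite !in_itv /= => /andP[rb bd] /andP[ad ar].
exists a, b; split => // y ay yb ry; apply/eqP/negP => /negP yr.
have hy : y \in rootsR P.
  by have := roots_on_rootsR P0 y; rewrite ry in_itv /= => <-.
have := dle y hy yr; rewrite real_leNgt ?real_normK ?num_real ?gtr0_real //.
by rewrite ltr_norml; apply/negP/negPn/andP; split; lra.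
Qed.

Lemma backward (r : R) : algebraicOver (@ratr R) r -> in_tilde r.
Proof.
case=> p pn0 rt; pose P := map_poly (@ratr R) p.
have P0 : P != 0 by rewrite map_poly_eq0.
have [a [b [ar rb iso]]] := isolate r P0.
set C := a :: b :: (polyseq p).
pose M := foldr (fun c m => maxn m (maxn (absz (numq c)) (absz (denq c)))) 1%N C.
have M0 : (0 < M)%N.
  by rewrite /M; elim: (C) => [|c l IH] //=; rewrite (leq_trans IH) ?leq_maxl.
have hM c : c \in C -> (absz (numq c) <= M)%N /\ (absz (denq c) <= M)%N.
  rewrite /M; elim: (C) => [|c' l IH] //=; rewrite inE => /orP[/eqP ->|/IH [h1 h2]].
    by split; rewrite leq_max (leq_maxl, leq_maxr) orbT.
  by split; rewrite leq_max ?h1 ?h2.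
pose cs := map (@ratr R) (polyseq p).
set u := Num.sqrt (r - ratr a); set t := Num.sqrt (ratr b - r).
pose A := r :: ints M ++ map ratr C ++ hset cs r ++ [:: u * u; t * t; u; t].
exists A; split; first by rewrite mem_head.
move=> f hf; have [_ h2 h3] := hf.
have rA : r \in A by rewrite mem_head.
have iA : {subset ints M <= A} by move=> x hx; rewrite /A inE mem_cat hx orbT.
have cA c : c \in C -> ratr c \in A.
  by move=> hc; rewrite /A inE !mem_cat map_f ?orbT.
have hA : {subset hset cs r <= A} by move=> x hx; rewrite /A inE !mem_cat hx !orbT.
have eA x : x \in [:: u * u; t * t; u; t] -> x \in A.
  by move=> hx; rewrite /A inE !mem_cat hx !orbT.
have fc c : c \in C -> f (ratr c) = ratr c.
  by move=> hc; have [h1 h2'] := hM c hc; apply: (forcerat hf iA M0) => //; apply: cA.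
have fcs x : x \in cs -> f x = x.
  by move=> /mapP [c hc ->]; apply: fc; rewrite !inE hc !orbT.
have fh := forcehorner hf hA rA fcs.
have hP : horner_rec cs r = 0.
  by move: rt; rewrite /root /P map_polyE horner_Poly => /eqP.
have A0 : (0 : R) \in A by apply: iA; rewrite mem_cat; apply/orP; left; apply/mapP; exists 0%N.
have rf : root P (f r).
  by rewrite /root /P map_polyE horner_Poly -fh hP (force0 hf A0).
have aA : ratr a \in A by apply: cA; rewrite mem_head.
have bA : ratr b \in A by apply: cA; rewrite !inE eqxx orbT.
have uuA : u * u \in A by apply: eA; rewrite mem_head.
have ttA : t * t \in A by apply: eA; rewrite !inE eqxx orbT.
have uA : u \in A by apply: eA; rewrite !inE eqxx !orbT.
have tA : t \in A by apply: eA; rewrite !inE eqxx !orbT.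
have E1 : ratr a + u * u = r.
  by rewrite -expr2 sqr_sqrtr ?subr_ge0 ?ltW // addrC subrK.
have E2 : r + t * t = ratr b.
  by rewrite -expr2 sqr_sqrtr ?subr_ge0 ?ltW // addrC subrK.
have F1 := h2 _ _ aA uuA; rewrite E1 in F1; have {}F1 := F1 rA.
have F2 := h2 _ _ rA ttA; rewrite E2 in F2; have {}F2 := F2 bA.
rewrite (h3 _ _ uA uA uuA) fc ?mem_head // in F1.
rewrite (h3 _ _ tA tA ttA) fc ?inE ?eqxx ?orbT // in F2.
apply: iso => //.
  by rewrite F1 lerDl -expr2 sqr_ge0.
by rewrite F2 lerDl -expr2 sqr_ge0.
Qed.

End Backward.

End Dev.

Theorem theorem6 (R : realType) (r : R) :
  in_tilde r <-> algebraicOver (@ratr R) r.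
Proof.
split; [exact: Dev.forward | exact: Dev.backward].
Qed.
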